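(* Let $M$ be a mould such that $M^0=0$, $M^1=0$, $M$ is alternal, and there exists a constant mould $C$ such that $\mathrm{swap}(M)+C$ is alternil. Then $M$ satisfies Ecalle's senary relation $$\mathrm{teru}(M)^r=\bigl(\mathrm{push}\circ\mathrm{mantar}\circ\mathrm{teru}\circ\mathrm{mantar}\bigr)(M)^r$$ for $r=1,2$ and $3$.
   Context: Moulds. A mould is a sequence $M=(M^m)_{m\geqslant 0}$ with $M^0\in\mathbb Q$ and $M^m=M^m(x_1,\dots,x_m)\in\mathbb Q[x_1,\dots,x_m]$; $M^m(u_1,\dots,u_m)$ denotes substitution $x_i\mapsto u_i$; $M$ is extended linearly to formal linear combinations of words by $(u_1,\dots,u_m)\mapsto M^m(u_1,\dots,u_m)$. A mould $C$ is constant if every $C^m$ is a rational number. For $m\geqslant1$: $\mathrm{teru}(M)^1=M^1$, and for $m\geqslant2$, $\mathrm{teru}(M)^m(u_1,\dots,u_m)=M^m(u_1,\dots,u_m)+\frac{1}{u_m}\{M^{m-1}(u_1,\dots,u_{m-2},u_{m-1}+u_m)-M^{m-1}(u_1,\dots,u_{m-2},u_{m-1})\}$; $\mathrm{mantar}(M)^m(u_1,\dots,u_m)=(-1)^{m-1}M^m(u_m,\dots,u_1)$; $\mathrm{push}(M)^m(u_1,\dots,u_m)=M^m(-u_1-\cdots-u_m,u_1,\dots,u_{m-1})$; $\mathrm{swap}(M)^m(v_1,\dots,v_m)=M^m(v_m,v_{m-1}-v_m,\dots,v_1-v_2)$ (in depth $0$: $\mathrm{teru},\mathrm{push},\mathrm{swap}$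 preserve $M^0$ and $\mathrm{mantar}(M)^0=-M^0$). $(M+C)^m=M^m+C^m$. Alternal: $M^0=0$ and for all $p,q\geqslant1$, $\sum_{w}M^{p+q}(w)=0$, the sum over all shuffles $w$ (counted with multiplicity) of the words $(x_1,\dots,x_p)$ and $(x_{p+1},\dots,x_{p+q})$. Alternil: define a bilinear product $\star$ on formal linear combinations of words in the letters $x_1,x_2,\dots$ with coefficients in $\mathbb Q(x_1,x_2,\dots)$ by $\emptyset\star\omega=\omega\star\emptyset=\omega$ and, for letters $u\neq v$ and words $\omega,\eta$, $u\omega\star v\eta=u(\omega\star v\eta)+v(u\omega\star\eta)+\frac{1}{u-v}\bigl(u(\omega\star\eta)-v(\omega\star\eta)\bigr)$. A mould $N$ is alternil if $N^0=0$ and for all $p,q\geqslant1$, applying $N$ (linearly, coefficients kept) to $(x_1,\dots,x_p)\star(x_{p+1},\dots,x_{p+q})$ gives $0$. *)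

(* Defs.v *)
(* moulds as families of multivariate polynomials over rat
   (multinomials), evaluated in the field of rational functions
   Q(x_1,...,x_n) = {fraction {mpoly rat[n]}}. *)
From HB Require Import structures.
From mathcomp Require Import all_boot all_order all_algebra.
From mathcomp Require Import mpoly.
From mathcomp Require Import fraction.
Set Implicit Arguments. Unset Strict Implicit. Unset Printing Implicit Defensive.
Import Order.TTheory GRing.Theory Num.Theory.
Local Open Scope ring_scope.

Definition RF (n : nat) := {fraction {mpoly rat[n]}}.

Definition polyF n (p : {mpoly rat[n]}) : RF n := tofrac p.
Definition cstF n (c : rat) : RF n := polyF (c%:MP).

(* The letters x_1, ..., x_n (0-indexed as 'X_0, ..., 'X_(n-1)). *)
Definition letters (n : nat) : seq (RF n) := [seq polyF 'X_i | i : 'I_n].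

Definition mould := forall m : nat, {mpoly rat[m]}.

Definition cmould := nat -> rat.

(* Evaluators of moulds on words (u_1,...,u_m) of rational functions: the
   depth is the length of the word. *)
Definition fmould := forall n : nat, seq (RF n) -> RF n.

(* M^m(u_1,...,u_m): substitution x_i |-> u_i. *)
Definition mev (M : mould) : fmould := fun n s =>
  mmap (@polyF n \o (fun c : rat => c%:MP))
       (fun i : 'I_(size s) => nth 0 s i) (M (size s)).

Definition mteru (F : fmould) : fmould := fun n s =>
  if (size s <= 1)%N then F n s else
  let a := nth 0 s (size s).-2 in
  let b := nth 0 s (size s).-1 in
  let pre := take (size s).-2 s in
  F n s + b^-1 * (F n (rcons pre (a + b)) - F n (rcons pre a)).

(* mmantar: (-1)^(m-1) M^m(u_m,...,u_1), and -M^0 in depth 0 *)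
Definition mmantar (F : fmould) : fmould := fun n s =>
  (-1) ^+ (size s).+1 * F n (rev s).

Definition mpush (F : fmould) : fmould := fun n s =>
  match s with
  | [::] => F n [::]
  | _ => F n ((- \sum_(x <- s) x) :: take (size s).-1 s)
  end.

(* mswap: M^m(v_m, v_(m-1) - v_m, ..., v_1 - v_2) *)
Definition mswap (F : fmould) : fmould := fun n s =>
  F n (pairmap (fun x y => y - x) 0 (rev s)).

Definition maddC (F : fmould) (C : cmould) : fmould := fun n s =>
  F n s + cstF n (C (size s)).

(* shuffle product of two words, as a list of words (with multiplicity) *)
Fixpoint shuffle {T : Type} (a : seq T) : seq T -> seq (seq T) :=
  match a with
  | [::] => fun b => [:: b]
  | u :: a' =>
    fix shuffle_ua (b : seq T) : seq (seq T) :=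
      match b with
      | [::] => [:: u :: a']
      | v :: b' => [seq u :: w | w <- shuffle a' (v :: b')] ++
                   [seq v :: w | w <- shuffle_ua b']
      end
  end.

(* The product [star] on formal linear combinations of words (lists of
   (coefficient, word) pairs), coefficients in the field K; letters are
   elements of K (here the variables x_i):
   u w * v e = u (w * v e) + v (u w * e) + 1/(u-v) (u (w * e) - v (w * e)).
   It is only used with distinct letters u <> v. *)
Fixpoint star {K : fieldType} (a : seq K) : seq K -> seq (K * seq K) :=
  match a with
  | [::] => fun b => [:: (1, b)]
  | u :: a' =>
    fix star_ua (b : seq K) : seq (K * seq K) :=
      match b with
      | [::] => [:: (1, u :: a')]
      | v :: b' =>
        [seq (cw.1, u :: cw.2) | cw <- star a' (v :: b')] ++
        [seq (cw.1, v :: cw.2) | cw <- star_ua b'] ++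
        [seq ((u - v)^-1 * cw.1, u :: cw.2) | cw <- star a' b'] ++
        [seq (- ((u - v)^-1 * cw.1), v :: cw.2) | cw <- star a' b']
      end
  end.

Arguments mev M n s : clear implicits.
Arguments mteru F n s : clear implicits.
Arguments mmantar F n s : clear implicits.
Arguments mpush F n s : clear implicits.
Arguments mswap F n s : clear implicits.
Arguments maddC F C n s : clear implicits.

Definition alternal (M : mould) : Prop :=
  M 0%N = 0 /\
  forall p q : nat, (0 < p)%N -> (0 < q)%N ->
    \sum_(w <- shuffle (take p (letters (p + q))) (drop p (letters (p + q))))
      mev M (p + q)%N w = 0.

Definition alternil (N : fmould) : Prop :=
  N 0%N [::] = 0 /\
  forall p q : nat, (0 < p)%N -> (0 < q)%N ->
    \sum_(cw <- star (take p (letters (p + q))) (drop p (letters (p + q))))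
      cw.1 * N (p + q)%N cw.2 = 0.

(* Main.v *)
Require Import Defs.
From HB Require Import structures.
From mathcomp Require Import all_boot all_order all_algebra.
From mathcomp Require Import mpoly.
From mathcomp Require Import fraction.
From mathcomp Require Import ring.
Set Implicit Arguments. Unset Strict Implicit. Unset Printing Implicit Defensive.
Import Order.TTheory GRing.Theory Num.Theory.
Local Open Scope ring_scope.

Lemma mmap_ext k (R S : ringType) (f f' : R -> S) (h h' : 'I_k -> S) p :
  f =1 f' -> h =1 h' -> mmap f h p = mmap f' h' p.
Proof.
move=> ef eh; rewrite /mmap; apply: eq_bigr => m _; rewrite ef; congr (_ * _).
by apply: mmap1_eq.
Qed.

Lemma mmap_nat k (R : ringType) (S T : ringType) (f : R -> S)
  (phi : {rmorphism S -> T}) (h : 'I_k -> S) p :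
  phi (mmap f h p) = mmap (phi \o f) (phi \o h) p.
Proof.
rewrite /mmap rmorph_sum; apply: eq_bigr => m _; rewrite rmorphM /=; congr (_ * _).
by rewrite /mmap1 rmorph_prod; apply: eq_bigr => i _; rewrite rmorphXn.
Qed.

Notation psi n s := (mmap (@tofrac {mpoly rat[n]} \o (@mpolyC n rat)) s).

Lemma letters3 : letters 3 = [:: polyF 'X_(inord 0); polyF 'X_(inord 1); polyF 'X_(inord 2)].
Proof.
have E : enum 'I_3 = [:: inord 0; inord 1; inord 2].
  by apply: (inj_map val_inj); rewrite val_enum_ord /= !inordK.
by rewrite /letters /image_mem E.
Qed.
Lemma letters2 : letters 2 = [:: polyF 'X_(inord 0); polyF 'X_(inord 1)].
Proof.
have E : enum 'I_2 = [:: inord 0; inord 1].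
  by apply: (inj_map val_inj); rewrite val_enum_ord /= !inordK.
by rewrite /letters /image_mem E.
Qed.

Definition P (M : mould) k (t : seq {mpoly rat[k]}) : {mpoly rat[k]} :=
  mmap (@mpolyC k rat) (fun i : 'I_(size t) => nth 0 t i) (M (size t)).

Lemma mevE M n (w : seq (RF n)) m (e : size w = m) :
  mev M n w = mmap (@polyF n \o (fun c : rat => c%:MP)) (fun i : 'I_m => nth 0 w i) (M m).
Proof. by case: m / e. Qed.

Lemma P_mev M n k (phi : {rmorphism {mpoly rat[k]} -> RF n})
  (hphi : forall c, phi c%:MP = polyF c%:MP) t :
  phi (P M t) = mev M n (map phi t).
Proof.
rewrite (mevE _ (size_map phi t)) /P mmap_nat; apply: mmap_ext => [c|i] /=.
  by rewrite hphi.
by rewrite (nth_map 0).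
Qed.

Lemma psiC n k (s : 'I_k -> RF n) c : psi n s c%:MP = polyF c%:MP.
Proof. by rewrite mmapC. Qed.

Lemma psiXn n k (pts : seq (RF n)) j : (j < k.+1)%N ->
  psi n (fun i : 'I_k.+1 => nth 0 pts i) 'X_(inord j) = nth 0 pts j.
Proof. by move=> hj; rewrite mmapX mmap1U inordK. Qed.

Lemma tofracC n c : (@tofrac {mpoly rat[n]}) c%:MP = polyF c%:MP.
Proof. by []. Qed.

Notation X j := ('X_(inord j) : {mpoly rat[_]}).

Lemma R2gen (M : mould) : alternal M -> forall n (a b c : RF n),
  mev M n [:: a; b; c] + mev M n [:: b; a; c] + mev M n [:: b; c; a] = 0.
Proof.
move=> [_ Halt] n a b c.
have h := Halt 1%N 2%N isT isT.
rewrite letters3 /= !big_cons big_nil addr0 addrA /polyF in h.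
have hQ : P M [:: X 0; X 1; X 2] + P M [:: X 1; X 0; X 2]
   + P M [:: X 1; X 2; X 0] = 0 :> {mpoly rat[3]}.
  apply/eqP; rewrite -(tofrac_eq0 (R := {mpoly rat[3]})); apply/eqP.
  rewrite !rmorphD !(P_mev M (@tofracC 3)) /=.
  exact: h.
have := congr1 (psi n (fun i : 'I_3 => nth 0 [:: a; b; c] i)) hQ.
by rewrite !rmorphD rmorph0 !(P_mev M (psiC _)) /= !psiXn.
Qed.
Lemma R1gen (M : mould) : alternal M -> forall n (a b : RF n),
  mev M n [:: a; b] + mev M n [:: b; a] = 0.
Proof.
move=> [_ Halt] n a b.
have h := Halt 1%N 1%N isT isT.
rewrite letters2 /= !big_cons big_nil addr0 /polyF in h.
have hQ : P M [:: X 0; X 1] + P M [:: X 1; X 0] = 0 :> {mpoly rat[2]}.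
  apply/eqP; rewrite -(tofrac_eq0 (R := {mpoly rat[2]})); apply/eqP.
  rewrite !rmorphD !(P_mev M (@tofracC 2)) /=.
  exact: h.
have := congr1 (psi n (fun i : 'I_2 => nth 0 [:: a; b] i)) hQ.
by rewrite !rmorphD rmorph0 !(P_mev M (psiC _)) /= !psiXn.
Qed.

Lemma mev1 (M : mould) : M 1%N = 0 -> forall n (a : RF n), mev M n [:: a] = 0.
Proof. by move=> H1 n a; rewrite /mev /= H1 mmap0. Qed.

Lemma aux11 (F : fieldType) (a b K I K1 : F) :
  1 * (a + K) + (1 * (b + K) + (I * 1 * (0 + K1) + - (I * 1) * (0 + K1))) = 0 ->
  a + b + 2%:R * K = 0.
Proof. by move=> h; rewrite -[RHS]h; ring. Qed.

Lemma S11gen (M : mould) (C : cmould) : alternil (maddC (mswap (mev M)) C) ->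
  M 1%N = 0 -> forall n (v1 v2 p q : RF n), p = v1 - v2 -> q = v2 - v1 ->
  mev M n [:: v2; p] + mev M n [:: v1; q] + 2%:R * cstF n (C 2%N) = 0.
Proof.
move=> [_ H] H1 n v1 v2 p q -> ->.
have h := H 1%N 1%N isT isT.
rewrite letters2 /= !big_cons big_nil addr0 /polyF /maddC /mswap /= in h.
rewrite !subr0 !(mev1 H1) -[(1+1)%N]/2%N in h.
have hQ : P M [:: X 1; X 0 - X 1] + P M [:: X 0; X 1 - X 0]
    + 2%:R * (C 2%N)%:MP = 0 :> {mpoly rat[2]}.
  apply/eqP; rewrite -(tofrac_eq0 (R := {mpoly rat[2]})); apply/eqP.
  rewrite !rmorphD rmorphM rmorph_nat !(P_mev M (@tofracC 2)) /= !tofracB.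
  exact: aux11 h.
have := congr1 (psi n (fun i : 'I_2 => nth 0 [:: v1; v2] i)) hQ.
by rewrite !rmorphD rmorphM rmorph_nat rmorph0 !(P_mev M (psiC _)) /= !mmapB !psiXn // psiC.
Qed.

Lemma aux12 (F : fieldType) (x0 x1 x2 A1 A2 A3 B4 B5 B6 K3 K2 : F) :
  x0 - x2 != 0 -> x0 - x1 != 0 ->
  1 * (A1 + K3) + (1 * (A2 + K3) + (1 * (A3 + K3) +
   ((x0 - x2)^-1 * 1 * (B4 + K2) + (- ((x0 - x2)^-1 * 1) * (B5 + K2) +
   ((x0 - x1)^-1 * 1 * (B6 + K2) + - ((x0 - x1)^-1 * 1) * (B5 + K2)))))) = 0 ->
  (x0 - x2) * (x0 - x1) * (A1 + A2 + A3 + K3 *+ 3) + (x0 - x1) * (B4 - B5)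
    + (x0 - x2) * (B6 - B5) = 0.
Proof.
move=> n1 n2 h; rewrite -[RHS](mulr0 ((x0 - x2) * (x0 - x1))) -h.
by field; rewrite n1 n2.
Qed.

Lemma nz k (p : {mpoly rat[k]}) (v : 'I_k -> rat) :
  meval v p != 0 -> tofrac p != 0 :> {fraction {mpoly rat[k]}}.
Proof. by rewrite tofrac_eq0; apply: contra => /eqP ->; rewrite meval0. Qed.

Lemma psiM n k (s : 'I_k -> RF n) (p q : {mpoly rat[k]}) :
  psi n s (p * q) = psi n s p * psi n s q.
Proof. exact: rmorphM. Qed.

Lemma S12gen (M : mould) (C : cmould) : alternil (maddC (mswap (mev M)) C) ->
  forall n (v1 v2 v3 : RF n),
  (v1 - v3) * (v1 - v2) * (mev M n [:: v3; v2 - v3; v1 - v2]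
     + mev M n [:: v3; v1 - v3; v2 - v1] + mev M n [:: v1; v3 - v1; v2 - v3]
     + cstF n (C 3%N) *+ 3)
  + (v1 - v2) * (mev M n [:: v1; v2 - v1] - mev M n [:: v3; v2 - v3])
  + (v1 - v3) * (mev M n [:: v3; v1 - v3] - mev M n [:: v3; v2 - v3]) = 0.
Proof.
move=> [_ H] n v1 v2 v3.
have h := H 1%N 2%N isT isT.
rewrite letters3 /= !big_cons big_nil addr0 /polyF /maddC /mswap /= in h.
rewrite !subr0 -[(1+2)%N]/3%N in h.
have hQ : (X 0 - X 2) * (X 0 - X 1) * (P M [:: X 2; X 1 - X 2; X 0 - X 1]
     + P M [:: X 2; X 0 - X 2; X 1 - X 0] + P M [:: X 0; X 2 - X 0; X 1 - X 2]
     + (C 3%N)%:MP *+ 3)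
  + (X 0 - X 1) * (P M [:: X 0; X 1 - X 0] - P M [:: X 2; X 1 - X 2])
  + (X 0 - X 2) * (P M [:: X 2; X 0 - X 2] - P M [:: X 2; X 1 - X 2])
   = 0 :> {mpoly rat[3]}.
  apply/eqP; rewrite -(tofrac_eq0 (R := {mpoly rat[3]})); apply/eqP.
  rewrite !(tofracB, tofracM, tofracMn, tofracD) !(P_mev M (@tofracC 3)) /= !tofracB.
  apply: aux12 h.
    by rewrite -tofracB; apply: (nz (v := fun i => i.+1%:R)); rewrite mevalB !mevalXU !inordK.
  by rewrite -tofracB; apply: (nz (v := fun i => i.+1%:R)); rewrite mevalB !mevalXU !inordK.
have := congr1 (psi n (fun i : 'I_3 => nth 0 [:: v1; v2; v3] i)) hQ.
by rewrite !(mmapB, psiM, mmapMn, mmapD) mmap0 !(P_mev M (psiC _)) /= !mmapB !psiXn // psiC.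
Qed.

Lemma letters1 : letters 1 = [:: polyF 'X_(inord 0)].
Proof.
have E : enum 'I_1 = [:: inord 0].
  by apply: (inj_map val_inj); rewrite val_enum_ord /= !inordK.
by rewrite /letters /image_mem E.
Qed.

Lemma Mant (M : mould) : alternal M -> forall n (a b c : RF n),
  mev M n [:: a; b; c] = mev M n [:: c; b; a].
Proof.
move=> HA n a b c; have h1 := R2gen HA a b c; have h2 := R2gen HA c b a.
apply/eqP; rewrite -subr_eq0; apply/eqP.
move: h1 h2; move: (mev M n _) (mev M n _) (mev M n _) (mev M n _) => A1 A2 A3 A4.
move=> h1 h2; rewrite -[RHS](subr0 0) -{1}h1 -h2. ring.
Qed.

Lemma R1p (M : mould) : alternal M -> forall n (a b a' b' : RF n),
  a = a' -> b = b' -> mev M n [:: a; b] = - mev M n [:: b'; a'].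
Proof.
move=> HA n a b a' b' -> ->; have h := R1gen HA a' b'.
by apply/eqP; rewrite -subr_eq0 opprK h.
Qed.

Lemma two_neq0 n : (2%:R : RF n) != 0.
Proof.
rewrite -(rmorph_nat (@tofrac {mpoly rat[n]})) tofrac_eq0 -mpolyC_nat mpolyC_eq0.
by [].
Qed.

Lemma auxK (F : fieldType) (a b K : F) : 2%:R != 0 :> F ->
  a + b + 2%:R * K = 0 -> a + b = 0 -> K = 0.
Proof.
move=> n2 h r; rewrite r add0r in h.
by move/eqP: h; rewrite mulf_eq0 (negbTE n2) => /eqP.
Qed.

Lemma K2zero (M : mould) (C : cmould) : alternal M ->
  alternil (maddC (mswap (mev M)) C) -> M 1%N = 0 -> forall n,
  cstF n (C 2%N) = 0.
Proof.
move=> HA HC H1 n.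
have h := S11gen HC H1 (v1 := 0) (v2 := 0) (p := 0) (q := 0) (esym (subrr 0)) (esym (subrr 0)).
exact: auxK (two_neq0 n) (h n) (R1gen HA 0 0).
Qed.

Lemma aux_teru (F : fieldType) (c d A1 A2 A3 K B1 B2 B3 : F) : c != 0 -> d != 0 ->
  d * c * (A1 + A2 + A3 + K) + c * (B1 - B2) + d * (B3 - B2) = 0 ->
  A1 + c^-1 * (B3 - B2) = - (A2 + A3 + K) - d^-1 * (B1 - B2).
Proof.
move=> nc nd h; apply/eqP; rewrite -subr_eq0 -(mulr0 (d * c)^-1) -h; apply/eqP.
by field; rewrite nc nd.
Qed.

Lemma S12teru (M : mould) (C : cmould) : alternil (maddC (mswap (mev M)) C) ->
  forall n (a b c d e f g : RF n), c != 0 -> d != 0 ->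
  d = b + c -> e = - c -> f = a + b + c -> g = - d ->
  mev M n [:: a; b; c] + c^-1 * (mev M n [:: a; d] - mev M n [:: a; b]) =
  - (mev M n [:: a; d; e] + mev M n [:: f; g; b] + cstF n (C 3%N) *+ 3)
  - d^-1 * (mev M n [:: f; e] - mev M n [:: a; b]).
Proof.
move=> HC n a b c d e f g nc nd hd he hf hg.
have h := S12gen HC f (a + b) a.
have E1 : a + b - a = b by ring.
have E2 : f - (a + b) = c by rewrite hf; ring.
have E3 : f - a = d by rewrite hf hd; ring.
have E4 : a + b - f = e by rewrite hf he; ring.
have E5 : a - f = g by rewrite hf hg hd; ring.
rewrite E1 E2 E3 E4 E5 in h.
exact: aux_teru nc nd h.
Qed.

Lemma fin2 (F : fieldType) (b12 by1 bs bxy bms K : F) :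
  b12 + bs + 2%:R * K = 0 -> bxy + bms + 2%:R * K = 0 -> by1 = - bxy ->
  bms = - bs -> K = 0 -> b12 = by1.
Proof.
move=> h1 h2 -> e2 k0; rewrite e2 k0 in h2; rewrite k0 in h1.
apply/eqP; rewrite -subr_eq0 opprK.
have -> : b12 + bxy = (b12 + bs + 2%:R * 0) + (bxy + - bs + 2%:R * 0) by ring.
by rewrite h1 h2 addr0.
Qed.

Lemma fin2b (F : fieldType) (b b' t u : F) : b = b' ->
  b + t^-1 * (0 - 0) = (-1) ^+ 3 * ((-1) ^+ 3 * b' + u^-1 * ((-1) ^+ 2 * 0 - (-1) ^+ 2 * 0)).
Proof. by move=> ->; ring. Qed.

Lemma fin3 (F : fieldType) (x3 y s K ax a1 a2 a3 a4 a5 a6 bq b12 b5 b6 b21 b7 b8 : F) :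
  ax + x3^-1 * (bq - b12) = - (a1 + a2 + K) - s^-1 * (b5 - b12) ->
  a3 + y^-1 * (b6 - b21) = - (a6 + a4 + K) - (- s)^-1 * (b7 - b21) ->
  a5 = a3 -> a1 = a4 -> a6 = a2 -> b7 = - b5 -> b21 = - b12 -> b8 = - b6 ->
  y != 0 -> s != 0 ->
  ax + x3^-1 * (bq - b12) =
  (-1) ^+ 4 * ((-1) ^+ 4 * a5 + y^-1 * ((-1) ^+ 3 * b8 - (-1) ^+ 3 * b12)).
Proof.
move=> h1 h2 e5 e1 e6 e7 e21 e8 ny ns; subst a5 a1 a6 b7 b21 b8; rewrite h1.
move/(canRL (addrK _)): h2 => ->.
by field; rewrite ny oppr_eq0 ns.
Qed.

Lemma lin_nz3 (p : {mpoly rat[3]}) : meval (fun i : 'I_3 => i.+1%:R) p != 0 ->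
  tofrac p != 0 :> RF 3.
Proof. exact: nz. Qed.

Unset Implicit Arguments.
Set Strict Implicit.

Theorem proposition4p2 (M : mould) :
  M 0%N = 0 -> M 1%N = 0 -> alternal M ->
  (exists C : cmould, alternil (maddC (mswap (mev M)) C)) ->
  forall r : nat, (1 <= r <= 3)%N ->
    mteru (mev M) r (letters r) =
    mpush (mmantar (mteru (mmantar (mev M)))) r (letters r).
Proof.
move=> H0 H1 HA [C HC] r /andP[r1 r3].
case: r r1 r3 => [|[|[|[|r]]]] // _ _.
- rewrite letters1 /mteru /mpush /mmantar /= !big_cons big_nil /rev /=.
  by rewrite !(mev1 H1) !mulr0.
- rewrite letters2 /mteru /mpush /mmantar /= !big_cons big_nil addr0 /rev /=.
  rewrite !(mev1 H1).
  set x1 := polyF _; set x2 := polyF _.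
  apply: fin2b.
  have s1 := S11gen HC H1 (v1 := x1 + x2) (v2 := x1) (p := x2) (q := - x2)
     (ltac:(ring)) (ltac:(ring)).
  have s2 := S11gen HC H1 (v1 := - x2) (v2 := x1) (p := - (x1 + x2)) (q := x1 + x2)
     (ltac:(ring)) (ltac:(ring)).
  have e1 := R1p HA (a := - (x1 + x2)) (b := x1) (a' := - (x1 + x2)) (b' := x1) erefl erefl.
  have e2 := R1p HA (a := - x2) (b := x1 + x2) (a' := - x2) (b' := x1 + x2) erefl erefl.
  exact: fin2 s1 s2 e1 e2 (K2zero HA HC H1 2).
- rewrite letters3 /mteru /mpush /mmantar /= !big_cons big_nil addr0 /rev /=.
  set x1 := polyF _; set x2 := polyF _; set x3 := polyF _.
  have nz3 : x3 != 0.
    by apply: lin_nz3; rewrite mevalXU inordK.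
  have nz23 : x2 + x3 != 0.
    by rewrite /x2 /x3 /polyF -tofracD; apply: lin_nz3; rewrite mevalD !mevalXU !inordK.
  have nzy : - (x1 + (x2 + x3)) != 0.
    rewrite /x1 /x2 /x3 /polyF -!tofracD -tofracN; apply: lin_nz3.
    by rewrite mevalN !mevalD !mevalXU !inordK.
  have nzd : - (x2 + x3) != 0 by rewrite oppr_eq0.
  have h1 := S12teru HC (a := x1) (b := x2) (c := x3) (d := x2 + x3) (e := - x3)
    (f := - - (x1 + (x2 + x3))) (g := - (x2 + x3)) nz3 nz23 erefl erefl (ltac:(ring)) erefl.
  have h2 := S12teru HC (a := x2) (b := x1) (c := - (x1 + (x2 + x3)))
    (d := - (x2 + x3)) (e := - - (x1 + (x2 + x3))) (f := - x3) (g := x2 + x3)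
    nzy nzd (ltac:(ring)) erefl (ltac:(ring)) (ltac:(ring)).
  have m1 := Mant HA (- (x1 + (x2 + x3))) x1 x2.
  have m2 := Mant HA x1 (x2 + x3) (- x3).
  have m3 := Mant HA x2 (- (x2 + x3)) (- - (x1 + (x2 + x3))).
  have r1 := R1p HA (a := - x3) (b := - - (x1 + (x2 + x3))) erefl erefl.
  have r2 := R1p HA (a := x2) (b := x1) erefl erefl.
  have r3 := R1p HA (a := x1 - (x1 + (x2 + x3))) (b := x2) (a' := - (x2 + x3)) (b' := x2)
    (ltac:(ring)) erefl.
  exact: fin3 h1 h2 m1 m2 m3 r1 r2 r3 nzy nz23.
Qed.
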